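(* Let $(X,r)$ be a non-degenerate symmetric set (not necessarily finite) whose YB monoid $S(X,r)$ embeds in $G=G(X,r)$. The following are equivalent: (1) the associated left brace $(G,+,\cdot)$ is a two-sided brace; (2) the associated symmetric group $(G,r_G)$ is square-free (i.e. ${}^aa=a$ for all $a\in G$); (3) $(X,r)$ is square-free and ${}^{xy}(xy)=xy$ for all $x,y\in G$; (4) the group $G(X,r)$ is the free abelian group on $X$, so $(G,r_G)$ is the trivial solution; (5) $(X,r)$ is the trivial solution, i.e. $r(x,y)=(y,x)$ for all $x,y\in X$.
   Context: A symmetric set is a pair $(X,r)$, $X$ nonempty, $r(x,y)=({}^xy,x^y)$ a non-degenerate (all $y\mapsto{}^xy$, $y\mapsto y^x$ bijective), involutive bijection of $X\times X$ satisfying $r^{12}r^{23}r^{12}=r^{23}r^{12}r^{23}$ on $X^3$; square-free if $r(x,x)=(x,x)$ for all $x$. $S(X,r)$ (resp. $G(X,r)$) is the monoid (resp. group) generated by $X$ with relations $xy=zt$ whenever $r(x,y)=(z,t)\neq(x,y)$. A symmetric group is $(G,\sigma)$, $\sigma(u,v)=({}^uv,u^v)$ an involutive bijection of $G\times G$ with ${}^a1=1,{}^1u=u,1^u=1,a^1=a$, ${}^{ab}u={}^a({}^bu)$, $a^{uv}=(a^u)^v$, ${}^a(uv)=({}^au)({}^{a^u}v)$, $(ab)^u=(a^{{}^bu})(b^u)$, $uv=({}^uv)(u^v)$; $(G,r_G)$ is $G(X,r)$ with the unique such braiding restricting to $r$ on $X\times X$. Its left brace is $(G,+,\cdot)$ with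 $a+b:=a({}^{a^{-1}}b)$. A left brace $(B,+,\cdot)$ (abelian group $(B,+)$, group $(B,\cdot)$, $a(b+c)+a=ab+ac$) is two-sided if additionally $(a+b)c+c=ac+bc$ for all $a,b,c$. *)

(* Defs.v *)
Set Implicit Arguments.

Record monoid_on (M : Type) := MonoidOn {
  mmul : M -> M -> M;
  mone : M;
  mmulA : forall a b c, mmul a (mmul b c) = mmul (mmul a b) c;
  mmul1l : forall a, mmul mone a = a;
  mmul1r : forall a, mmul a mone = a
}.

Record group_on (G : Type) := GroupOn {
  gmul : G -> G -> G;
  gone : G;
  ginv : G -> G;
  gmulA : forall a b c, gmul a (gmul b c) = gmul (gmul a b) c;
  gmul1l : forall a, gmul gone a = a;
  gmul1r : forall a, gmul a gone = a;
  gmulVl : forall a, gmul (ginv a) a = gone;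
  gmulVr : forall a, gmul a (ginv a) = gone
}.

Definition abelian_group_on (G : Type) (g : group_on G) : Prop :=
  forall a b, gmul g a b = gmul g b a.

Definition is_group_hom (G H : Type) (g : group_on G) (h : group_on H)
  (phi : G -> H) : Prop :=
  forall a b, phi (gmul g a b) = gmul h (phi a) (phi b).

Definition is_monoid_hom_to_group (M G : Type) (m : monoid_on M) (g : group_on G)
  (phi : M -> G) : Prop :=
  phi (mone m) = gone g /\
  forall a b, phi (mmul m a b) = gmul g (phi a) (phi b).

Definition is_monoid_hom (M N : Type) (m : monoid_on M) (n : monoid_on N)
  (phi : M -> N) : Prop :=
  phi (mone m) = mone n /\
  forall a b, phi (mmul m a b) = mmul n (phi a) (phi b).

Definition fun_bijective (A B : Type) (f : A -> B) : Prop :=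
  exists g : B -> A, (forall a, g (f a) = a) /\ (forall b, f (g b) = b).

Definition injective_fun (A B : Type) (f : A -> B) : Prop :=
  forall a a', f a = f a' -> a = a'.

(* r (x, y) = ( ^x y , x^y ) *)
Definition lact (X : Type) (r : X * X -> X * X) (x y : X) : X := fst (r (x, y)).
Definition ract (X : Type) (r : X * X -> X * X) (x y : X) : X := snd (r (x, y)).

Definition r12 (X : Type) (r : X * X -> X * X) (t : X * X * X) : X * X * X :=
  let '(a, b, c) := t in let '(a', b') := r (a, b) in (a', b', c).
Definition r23 (X : Type) (r : X * X -> X * X) (t : X * X * X) : X * X * X :=
  let '(a, b, c) := t in let '(b', c') := r (b, c) in (a, b', c').

Definition nondegenerate (X : Type) (r : X * X -> X * X) : Prop :=
  forall x, fun_bijective (fun y => lact r x y) /\ fun_bijective (fun y => ract r y x).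

Definition involutive_map (X : Type) (r : X * X -> X * X) : Prop :=
  forall p, r (r p) = p.

Definition braided (X : Type) (r : X * X -> X * X) : Prop :=
  forall t, r12 r (r23 r (r12 r t)) = r23 r (r12 r (r23 r t)).

(* a symmetric set (involutivity makes r a bijection of X x X) *)
Definition symmetric_set (X : Type) (r : X * X -> X * X) : Prop :=
  inhabited X /\ nondegenerate r /\ involutive_map r /\ braided r.

Definition square_free_set (X : Type) (r : X * X -> X * X) : Prop :=
  forall x, r (x, x) = (x, x).

Definition trivial_solution (X : Type) (r : X * X -> X * X) : Prop :=
  forall x y, r (x, y) = (y, x).

(* defining relations xy = zt whenever r(x,y) = (z,t) (the case (z,t)=(x,y) is vacuous) *)
Definition respects_group (X H : Type) (r : X * X -> X * X) (h : group_on H)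
  (f : X -> H) : Prop :=
  forall x y, gmul h (f x) (f y) = gmul h (f (lact r x y)) (f (ract r x y)).

Definition respects_monoid (X N : Type) (r : X * X -> X * X) (n : monoid_on N)
  (f : X -> N) : Prop :=
  forall x y, mmul n (f x) (f y) = mmul n (f (lact r x y)) (f (ract r x y)).

Definition is_YB_group (X G : Type) (r : X * X -> X * X) (g : group_on G)
  (iota : X -> G) : Prop :=
  respects_group r g iota /\
  forall (H : Type) (h : group_on H) (f : X -> H), respects_group r h f ->
    (exists phi : G -> H, is_group_hom g h phi /\ forall x, phi (iota x) = f x) /\
    (forall phi psi : G -> H,
        is_group_hom g h phi -> (forall x, phi (iota x) = f x) ->
        is_group_hom g h psi -> (forall x, psi (iota x) = f x) ->
        forall a, phi a = psi a).

Definition is_YB_monoid (X M : Type) (r : X * X -> X * X) (m : monoid_on M)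
  (iotaS : X -> M) : Prop :=
  respects_monoid r m iotaS /\
  forall (N : Type) (n : monoid_on N) (f : X -> N), respects_monoid r n f ->
    (exists phi : M -> N, is_monoid_hom m n phi /\ forall x, phi (iotaS x) = f x) /\
    (forall phi psi : M -> N,
        is_monoid_hom m n phi -> (forall x, phi (iotaS x) = f x) ->
        is_monoid_hom m n psi -> (forall x, psi (iotaS x) = f x) ->
        forall a, phi a = psi a).

Definition is_free_abelian_on (X G : Type) (g : group_on G) (iota : X -> G) : Prop :=
  abelian_group_on g /\
  forall (H : Type) (h : group_on H) (f : X -> H), abelian_group_on h ->
    (exists phi : G -> H, is_group_hom g h phi /\ forall x, phi (iota x) = f x) /\
    (forall phi psi : G -> H,
        is_group_hom g h phi -> (forall x, phi (iota x) = f x) ->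
        is_group_hom g h psi -> (forall x, psi (iota x) = f x) ->
        forall a, phi a = psi a).

Definition lactG (G : Type) (s : G * G -> G * G) (a u : G) : G := fst (s (a, u)).
Definition ractG (G : Type) (s : G * G -> G * G) (a u : G) : G := snd (s (a, u)).

Definition symmetric_group (G : Type) (g : group_on G) (s : G * G -> G * G) : Prop :=
  let mul := gmul g in let one := gone g in
  let l := lactG s in let rr := ractG s in
  (forall p, s (s p) = p) /\
  (forall a, l a one = one) /\ (forall u, l one u = u) /\
  (forall u, rr one u = one) /\ (forall a, rr a one = a) /\
  (forall a b u, l (mul a b) u = l a (l b u)) /\
  (forall a u v, rr a (mul u v) = rr (rr a u) v) /\
  (forall a u v, l a (mul u v) = mul (l a u) (l (rr a u) v)) /\
  (forall a b u, rr (mul a b) u = mul (rr a (l b u)) (rr b u)) /\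
  (forall u v, mul u v = mul (l u v) (rr u v)).

Definition extends_r (X G : Type) (r : X * X -> X * X) (iota : X -> G)
  (s : G * G -> G * G) : Prop :=
  forall x y, s (iota x, iota y) = (iota (lact r x y), iota (ract r x y)).

Definition brace_add (G : Type) (g : group_on G) (s : G * G -> G * G) (a b : G) : G :=
  gmul g a (lactG s (ginv g a) b).

Definition two_sided (G : Type) (g : group_on G) (s : G * G -> G * G) : Prop :=
  forall a b c,
    brace_add g s (gmul g (brace_add g s a b) c) c
    = brace_add g s (gmul g a c) (gmul g b c).

(* Main.v *)
Require Import Defs.
From Stdlib Require Import FunctionalExtensionality PropExtensionality ProofIrrelevance.
Set Implicit Arguments.

Lemma g_cancel_l G (g : group_on G) a b c : gmul g a b = gmul g a c -> b = c.
Proof.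
  intro H. rewrite <- (gmul1l g b), <- (gmul1l g c), <- (gmulVl g a), <- !gmulA, H. reflexivity.
Qed.

Lemma g_cancel_r G (g : group_on G) a b c : gmul g b a = gmul g c a -> b = c.
Proof.
  intro H. rewrite <- (gmul1r g b), <- (gmul1r g c), <- (gmulVr g a), !gmulA, H. reflexivity.
Qed.

Lemma g_inv_uniq G (g : group_on G) a u : gmul g a u = gone g -> a = ginv g u.
Proof.
  intro H. apply (g_cancel_r g u). rewrite H, gmulVl. reflexivity.
Qed.

Lemma g_inv_mul G (g : group_on G) a b : ginv g (gmul g a b) = gmul g (ginv g b) (ginv g a).
Proof.
  symmetry. apply g_inv_uniq. rewrite <- gmulA, (gmulA g (ginv g a)), gmulVl, gmul1l, gmulVl.
  reflexivity.
Qed.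

Lemma g_comm_inv G (g : group_on G) a b : gmul g a b = gmul g b a ->
  gmul g a (ginv g b) = gmul g (ginv g b) a.
Proof.
  intro H. apply (g_cancel_l g b). rewrite !gmulA, <- H, gmulVr, gmul1l.
  rewrite <- gmulA, gmulVr, gmul1r. reflexivity.
Qed.

Lemma g_comm_mul G (g : group_on G) a b c : gmul g a c = gmul g c a ->
  gmul g b c = gmul g c b -> gmul g (gmul g a b) c = gmul g c (gmul g a b).
Proof.
  intros H1 H2. rewrite <- gmulA, H2, gmulA, H1, gmulA. reflexivity.
Qed.

Lemma sig_eq_pi (A : Type) (P : A -> Prop) (u v : {a | P a}) : proj1_sig u = proj1_sig v -> u = v.
Proof. destruct u, v; simpl; intros ->; f_equal; apply proof_irrelevance. Qed.


Definition sub_group_on G (g : group_on G) (P : G -> Prop) (H1 : P (gone g))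
  (Hm : forall a b, P a -> P b -> P (gmul g a b)) (Hi : forall a, P a -> P (ginv g a)) :
  group_on {a | P a}.
Proof.
  refine (@GroupOn {a | P a}
    (fun u v => exist P (gmul g (proj1_sig u) (proj1_sig v)) (Hm _ _ (proj2_sig u) (proj2_sig v)))
    (exist P (gone g) H1)
    (fun u => exist P (ginv g (proj1_sig u)) (Hi _ (proj2_sig u))) _ _ _ _ _);
  intros; apply sig_eq_pi; simpl.
  - apply gmulA. - apply gmul1l. - apply gmul1r. - apply gmulVl. - apply gmulVr.
Defined.

Lemma YB_ind X G (r : X * X -> X * X) (g : group_on G) iota :
  is_YB_group r g iota ->
  forall P : G -> Prop, P (gone g) -> (forall a b, P a -> P b -> P (gmul g a b)) ->
  (forall a, P a -> P (ginv g a)) -> (forall x, P (iota x)) -> forall a, P a.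
Proof.
  intros [Hresp HU] P H1 Hm Hi Hx.
  set (sg := sub_group_on g P H1 Hm Hi).
  set (f := fun x => exist P (iota x) (Hx x)).
  assert (Hf : respects_group r sg f).
  { intros x y. apply sig_eq_pi. simpl. apply Hresp. }
  destruct (HU _ sg f Hf) as [[phi [Hphi Hphix]] _].
  set (psi := fun a => proj1_sig (phi a)).
  destruct (HU _ g iota Hresp) as [_ Huniq].
  assert (E : forall a, psi a = a).
  { apply (Huniq psi (fun a => a)).
    - intros a b. unfold psi. rewrite Hphi. reflexivity.
    - intros x. unfold psi. rewrite Hphix. reflexivity.
    - intros a b. reflexivity.
    - reflexivity. }
  intro a. rewrite <- (E a). unfold psi. apply proj2_sig.
Qed.

Ltac sgd Hs := let Hs' := fresh in pose proof Hs as Hs'; unfold symmetric_group in Hs'; cbv zeta in Hs';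
  destruct Hs' as (Hinv & Hl1 & H1l & Hr1 & H1r & Hlmul & Hrmul & Hlmuls & Hrmuls & Hfac).

Lemma pair_eta A B (p : A * B) : p = (fst p, snd p).
Proof. destruct p; reflexivity. Qed.


Lemma l_inv G (g : group_on G) s : symmetric_group g s ->
  forall a b, lactG s (ginv g a) (lactG s a b) = b.
Proof. intros Hs a b; sgd Hs. rewrite <- Hlmul, gmulVl, H1l. reflexivity. Qed.

Lemma l_inv' G (g : group_on G) s : symmetric_group g s ->
  forall a b, lactG s a (lactG s (ginv g a) b) = b.
Proof. intros Hs a b; sgd Hs. rewrite <- Hlmul, gmulVr, H1l. reflexivity. Qed.

Lemma l_inj G (g : group_on G) s : symmetric_group g s ->
  forall a b c, lactG s a b = lactG s a c -> b = c.
Proof. intros Hs a b c H. rewrite <- (l_inv Hs a b), H, (l_inv Hs). reflexivity. Qed.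

Lemma invol_l G (g : group_on G) s : symmetric_group g s ->
  forall a v, lactG s (lactG s a v) (ractG s a v) = a.
Proof.
  intros Hs a v; sgd Hs. unfold lactG, ractG.
  rewrite <- pair_eta, Hinv. reflexivity.
Qed.

Lemma add_comm G (g : group_on G) s : symmetric_group g s ->
  forall a b, brace_add g s a b = brace_add g s b a.
Proof.
  intros Hs a b; sgd Hs. unfold brace_add.
  rewrite Hfac, (l_inv' Hs). f_equal.
  pose proof (invol_l Hs a (lactG s (ginv g a) b)) as E.
  rewrite (l_inv' Hs) in E. apply (f_equal (lactG s (ginv g b))) in E.
  rewrite (l_inv Hs) in E. exact E.
Qed.

Lemma mul_as_add G (g : group_on G) s : symmetric_group g s ->
  forall a b, gmul g a b = brace_add g s a (lactG s a b).
Proof. intros Hs a b. unfold brace_add. rewrite (l_inv Hs). reflexivity. Qed.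

Lemma l_add G (g : group_on G) s : symmetric_group g s ->
  forall a b c, lactG s a (brace_add g s b c) = brace_add g s (lactG s a b) (lactG s a c).
Proof.
  intros Hs a b c; sgd Hs. unfold brace_add. rewrite Hlmuls. f_equal.
  set (c' := lactG s (ginv g b) c).
  assert (Ec : c = lactG s b c') by (unfold c'; rewrite (l_inv' Hs); reflexivity).
  clearbody c'. rewrite Ec. rewrite <- (Hlmul a b c'), (Hfac a b), Hlmul, (l_inv Hs). reflexivity.
Qed.

Lemma add_assoc G (g : group_on G) s : symmetric_group g s ->
  forall a b c, brace_add g s (brace_add g s a b) c = brace_add g s a (brace_add g s b c).
Proof.
  intros Hs a b c; sgd Hs.
  symmetry. unfold brace_add at 1. rewrite (l_add Hs). unfold brace_add.
  rewrite g_inv_mul, Hlmul, gmulA. reflexivity.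
Qed.

Lemma add_cancel G (g : group_on G) s : symmetric_group g s ->
  forall a b c, brace_add g s a b = brace_add g s a c -> b = c.
Proof.
  intros Hs a b c H. unfold brace_add in H. apply g_cancel_l in H. apply (l_inj Hs) in H. exact H.
Qed.

Lemma add_middle G (g : group_on G) s : symmetric_group g s ->
  forall a b c d, brace_add g s (brace_add g s a b) (brace_add g s c d)
                = brace_add g s (brace_add g s a c) (brace_add g s b d).
Proof.
  intros Hs a b c d. rewrite !(add_assoc Hs). f_equal.
  rewrite <- !(add_assoc Hs). f_equal. apply (add_comm Hs).
Qed.

Lemma two_sided_key G (g : group_on G) s : symmetric_group g s -> two_sided g s ->
  forall x z, brace_add g s (lactG s (brace_add g s x x) z) z
            = brace_add g s (lactG s x z) (lactG s x z).
Proof.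
  intros Hs Hts x z. pose proof (Hts x x z) as T.
  rewrite (mul_as_add Hs (brace_add g s x x) z), (mul_as_add Hs x z) in T.
  rewrite (add_assoc Hs (brace_add g s x x)) in T.
  rewrite (add_middle Hs x (lactG s x z) x (lactG s x z)) in T.
  apply (add_cancel Hs) in T. exact T.
Qed.

Inductive NN (X : Type) : Type := N0 | N1 (x : X) | N2 (P : X * X -> Prop) | NB.
Arguments N0 {X}. Arguments NB {X}.

Definition orb X (r : X * X -> X * X) (x y : X) : X * X -> Prop :=
  fun p => p = (x, y) \/ p = r (x, y).

Definition nmul X (r : X * X -> X * X) (a b : NN X) : NN X :=
  match a, b with
  | N0, b => b
  | a, N0 => a
  | N1 x, N1 y => N2 (orb r x y)
  | _, _ => NB
  end.

Definition NN_monoid X (r : X * X -> X * X) : monoid_on (NN X).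
Proof.
  refine (@MonoidOn (NN X) (nmul r) N0 _ _ _).
  - intros [] [] []; reflexivity.
  - intros []; reflexivity.
  - intros []; reflexivity.
Defined.

Lemma NN_respects X (r : X * X -> X * X) : involutive_map r ->
  respects_monoid r (NN_monoid r) (fun x => N1 x).
Proof.
  intros Hinv x y. simpl. f_equal. unfold orb, lact, ract.
  apply functional_extensionality; intro p. apply propositional_extensionality.
  rewrite <- pair_eta, Hinv. tauto.
Qed.

Definition group_monoid G (g : group_on G) : monoid_on G :=
  @MonoidOn G (gmul g) (gone g) (gmulA g) (gmul1l g) (gmul1r g).

Lemma mon_lemmas X G M (r : X * X -> X * X) (g : group_on G) iota (m : monoid_on M) iotaS :
  involutive_map r -> is_YB_group r g iota -> is_YB_monoid r m iotaS ->
  (forall phi : M -> G, is_monoid_hom_to_group m g phi ->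
     (forall x, phi (iotaS x) = iota x) -> injective_fun phi) ->
  (forall a b, iota a = iota b -> a = b) /\
  (forall a b c d, gmul g (iota a) (iota b) = gmul g (iota c) (iota d) ->
     (a, b) = (c, d) \/ (a, b) = r (c, d)).
Proof.
  intros Hinv [HrG _] [HrM HU] Hemb.
  destruct (HU G (group_monoid g) iota HrG) as [[psi [[Hpsi1 Hpsi] Hpsix]] _].
  assert (Hinj : injective_fun psi) by (apply Hemb; [split; assumption | assumption]).
  destruct (HU _ (NN_monoid r) _ (NN_respects Hinv)) as [[phi [[Hphi1 Hphi] Hphix]] _].
  split.
  - intros a b E. rewrite <- !Hpsix in E. apply Hinj in E.
    apply (f_equal phi) in E. rewrite !Hphix in E. injection E; auto.
  - intros a b c d E. rewrite <- !Hpsix in E. simpl in Hpsi. rewrite <- !Hpsi in E.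
    apply Hinj in E. apply (f_equal phi) in E. rewrite !Hphi, !Hphix in E.
    simpl in E. injection E as E. apply (f_equal (fun P => P (a, b))) in E.
    unfold orb in E. assert (H : (a, b) = (a, b) \/ (a, b) = r (a, b)) by auto.
    rewrite E in H. exact H.
Qed.

Lemma g_inv_inv G (g : group_on G) a : ginv g (ginv g a) = a.
Proof. symmetry. apply g_inv_uniq. apply gmulVr. Qed.

Lemma g_inv_one G (g : group_on G) : ginv g (gone g) = gone g.
Proof. symmetry. apply g_inv_uniq. apply gmul1l. Qed.

Lemma l_pres X G (r : X * X -> X * X) (g : group_on G) iota s :
  nondegenerate r -> is_YB_group r g iota -> symmetric_group g s -> extends_r r iota s ->
  forall a z, exists w, lactG s a (iota z) = iota w.
Proof.
  intros Hnd HYB Hs Hext.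
  assert (lG : forall x y, lactG s (iota x) (iota y) = iota (lact r x y))
    by (intros; unfold lactG; rewrite Hext; reflexivity).
  assert (H : forall a, (forall z, exists w, lactG s a (iota z) = iota w) /\
                        (forall z, exists w, lactG s (ginv g a) (iota z) = iota w)).
  { apply (YB_ind HYB); sgd Hs.
    - rewrite g_inv_one. split; intro z; exists z; apply H1l.
    - intros a b [Ha1 Ha2] [Hb1 Hb2]. split; intro z.
      + destruct (Hb1 z) as [w Hw]. destruct (Ha1 w) as [w' Hw'].
        exists w'. rewrite Hlmul, Hw, Hw'. reflexivity.
      + destruct (Ha2 z) as [w Hw]. destruct (Hb2 w) as [w' Hw'].
        exists w'. rewrite g_inv_mul, Hlmul, Hw, Hw'. reflexivity.
    - intros a [Ha1 Ha2]. rewrite g_inv_inv. split; assumption.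
    - intro x. split; intro z.
      + exists (lact r x z). apply lG.
      + destruct (Hnd x) as [[h [_ Hh]] _]. exists (h z).
        rewrite <- (Hh z) at 1. rewrite <- lG. apply (l_inv Hs). }
  intros a z. apply H.
Qed.

Theorem mainTheorem11
  (X : Type) (r : X * X -> X * X)
  (G : Type) (g : group_on G) (iota : X -> G)
  (M : Type) (m : monoid_on M) (iotaS : X -> M)
  (sigma : G * G -> G * G) :
  symmetric_set r ->
  is_YB_group r g iota ->
  is_YB_monoid r m iotaS ->
  (* S(X,r) embeds in G(X,r): the canonical monoid map S -> G is injective *)
  (forall phi : M -> G, is_monoid_hom_to_group m g phi ->
     (forall x, phi (iotaS x) = iota x) -> injective_fun phi) ->
  (* sigma is the braiding r_G of G(X,r) extending r *)
  symmetric_group g sigma ->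
  extends_r r iota sigma ->
  let P1 := two_sided g sigma in
  let P2 := forall a : G, lactG sigma a a = a in
  let P3 := square_free_set r /\
            forall x y : G, lactG sigma (gmul g x y) (gmul g x y) = gmul g x y in
  let P4 := is_free_abelian_on g iota /\ (forall u v : G, sigma (u, v) = (v, u)) in
  let P5 := trivial_solution r in
  (P1 <-> P2) /\ (P2 <-> P3) /\ (P3 <-> P4) /\ (P4 <-> P5).
Proof.
  intros Hsym HYB HYBm Hemb Hs Hext. cbv zeta.
  destruct Hsym as (_ & Hnd & Hinvr & _).
  destruct (mon_lemmas Hinvr HYB HYBm Hemb) as [M1 M2].
  pose proof HYB as [HrG HU].
  assert (lG : forall x y, lactG sigma (iota x) (iota y) = iota (lact r x y))
    by (intros; unfold lactG; rewrite Hext; reflexivity).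
  assert (rG : forall x y, ractG sigma (iota x) (iota y) = iota (ract r x y))
    by (intros; unfold ractG; rewrite Hext; reflexivity).
  assert (Linj : forall x a b, lact r x a = lact r x b -> a = b).
  { intros x a b E. destruct (Hnd x) as [[h [Hh _]] _].
    rewrite <- (Hh a), <- (Hh b). simpl. rewrite E. reflexivity. }
  assert (Hpair : forall x y, r (x, y) = (lact r x y, ract r x y)) by (intros; apply pair_eta).
  assert (Hinvl : forall x y, lact r (lact r x y) (ract r x y) = x).
  { intros x y. unfold lact at 1. rewrite <- Hpair, Hinvr. reflexivity. }
  assert (Htriv : (forall x z, lact r x z = z) -> trivial_solution r).
  { intros HL x y. rewrite Hpair, HL. f_equal.
    pose proof (Hinvl x y) as E. rewrite HL in E. exact E. }
  assert (i15 : two_sided g sigma -> trivial_solution r).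
  { intros Hts. apply Htriv. intros x0 z0.
    pose proof (two_sided_key Hs Hts (iota x0) (iota z0)) as K.
    destruct (l_pres Hnd HYB Hs Hext (brace_add g sigma (iota x0) (iota x0)) z0) as [w0 Hw0].
    rewrite Hw0, lG in K.
    set (v0 := lact r x0 z0) in K. change (v0 = z0).
    assert (Bi : forall p q, exists q', lact r p q' = q /\ brace_add g sigma (iota p) (iota q) = gmul g (iota p) (iota q')).
    { intros p q. destruct (Hnd p) as [[h [_ Hh]] _]. exists (h q). split. apply Hh.
      unfold brace_add. f_equal. rewrite <- (Hh q) at 1. rewrite <- lG. apply (l_inv Hs). }
    destruct (Bi w0 z0) as [a [Ha Ea]]. destruct (Bi v0 v0) as [b [Hb Eb]].
    rewrite Ea, Eb in K. apply M2 in K. destruct K as [K|K].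
    - injection K as K1 K2. rewrite <- Ha, K1, K2, Hb. reflexivity.
    - rewrite Hpair, Hb in K. injection K as K1 K2. rewrite <- Ha, K1, K2.
      pose proof (Hinvl v0 b) as E. rewrite Hb in E. symmetry. exact E. }
  assert (i35 : square_free_set r /\
            (forall x y : G, lactG sigma (gmul g x y) (gmul g x y) = gmul g x y) ->
            trivial_solution r).
  { intros [Hsq H3]. apply Htriv.
    assert (Lsq : forall x, lact r x x = x) by (intro x; unfold lact; rewrite Hsq; reflexivity).
    intros y x. apply (Linj x). rewrite (Lsq x).
    pose proof (H3 (iota x) (iota y)) as E. sgd Hs.
    rewrite Hlmul, Hlmuls, lG, rG, Hlmuls, lG, rG, !lG in E.
    apply M2 in E. destruct E as [E | E].
    - injection E as E _. exact E.
    - rewrite Hpair in E. injection E as E _.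
      pose proof E as E0. apply Linj in E.
      assert (E' : lact r y x = lact r y y) by (rewrite E, Lsq; reflexivity).
      apply Linj in E'. subst x. rewrite E0. apply Lsq. }
  assert (i23 : (forall a : G, lactG sigma a a = a) -> square_free_set r /\
            (forall x y : G, lactG sigma (gmul g x y) (gmul g x y) = gmul g x y)).
  { intros H2. split; [|intros; apply H2].
    intro x. assert (Ex : lact r x x = x) by (apply M1; rewrite <- lG; apply H2).
    rewrite Hpair, Ex. f_equal.
    pose proof (Hinvl x x) as E. rewrite Ex in E. apply (Linj x). rewrite E, Ex. reflexivity. }
  assert (i54 : trivial_solution r ->
     is_free_abelian_on g iota /\ (forall u v : G, sigma (u, v) = (v, u))).
  { intros H5.
    assert (LX : forall x y, lact r x y = y) by (intros; unfold lact; rewrite H5; reflexivity).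
    assert (RX : forall x y, ract r x y = x) by (intros; unfold ract; rewrite H5; reflexivity).
    assert (C0 : forall x y, gmul g (iota x) (iota y) = gmul g (iota y) (iota x)).
    { intros x y. rewrite (HrG x y), LX, RX. reflexivity. }
    assert (Hab : abelian_group_on g).
    { assert (C1 : forall x b, gmul g b (iota x) = gmul g (iota x) b).
      { intro x. apply (YB_ind HYB).
        - rewrite gmul1l, gmul1r. reflexivity.
        - intros a b Ha Hb. apply g_comm_mul; assumption.
        - intros a Ha. symmetry. apply g_comm_inv. symmetry. exact Ha.
        - intro y. apply C0. }
      intros a. pattern a. revert a. apply (YB_ind HYB).
      - intro b. rewrite gmul1l, gmul1r. reflexivity.
      - intros a b Ha Hb c. apply g_comm_mul; auto.
      - intros a Ha c. symmetry. apply g_comm_inv. symmetry. apply Ha.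
      - intros x b. symmetry. apply C1. }
    split.
    - split; [exact Hab|]. intros H h f Hh. apply HU. intros x y.
      rewrite LX, RX. apply Hh.
    - sgd Hs.
      assert (Lb : forall y a, lactG sigma a (iota y) = iota y).
      { intro y. apply (YB_ind HYB).
        - apply H1l.
        - intros a b Ha Hb. rewrite Hlmul, Hb, Ha. reflexivity.
        - intros a Ha. transitivity (lactG sigma (ginv g a) (lactG sigma a (iota y))).
          + rewrite Ha. reflexivity.
          + apply (l_inv Hs).
        - intro x. rewrite lG, LX. reflexivity. }
      assert (Lt : forall v a, lactG sigma a v = v).
      { apply (YB_ind HYB (fun v => forall a, lactG sigma a v = v)).
        - apply Hl1.
        - intros u w Hu Hw a. rewrite Hlmuls, Hu, Hw. reflexivity.
        - intros u Hu a. apply g_inv_uniq.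
          rewrite <- (Hl1 a), <- (gmulVl g u), Hlmuls, Hu. reflexivity.
        - intros y a. apply Lb. }
      intros u v. rewrite (pair_eta (sigma (u, v))). fold (lactG sigma u v) (ractG sigma u v).
      rewrite Lt. f_equal. apply (g_cancel_l g v). rewrite <- (Lt v u) at 1.
      rewrite <- Hfac. apply Hab. }
  assert (i45 : is_free_abelian_on g iota /\ (forall u v : G, sigma (u, v) = (v, u)) ->
                trivial_solution r).
  { intros [_ Hsw]. apply Htriv. intros x z. apply M1.
    pose proof (Hext x z) as E. rewrite Hsw in E. injection E as E1 E2. auto. }
  assert (i41 : is_free_abelian_on g iota /\ (forall u v : G, sigma (u, v) = (v, u)) ->
                two_sided g sigma).
  { intros [[Hab _] Hsw] a b c. unfold brace_add, lactG. rewrite !Hsw. simpl.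
    rewrite <- !gmulA. f_equal. rewrite (gmulA g c b c), <- (Hab b c), <- gmulA. reflexivity. }
  assert (i42 : is_free_abelian_on g iota /\ (forall u v : G, sigma (u, v) = (v, u)) ->
                forall a : G, lactG sigma a a = a).
  { intros [_ Hsw] a. unfold lactG. rewrite Hsw. reflexivity. }
  split; [|split; [|split]]; split; auto.
Qed.
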